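(* Let $n,d,\ell$ be positive integers with $n\geqslant\ell\geqslant d$, let $0<\beta\leqslant1$, and let $\boldsymbol{X}$ be a spreadable, $d$-dimensional random array on $[n]$ whose entries take values in a measurable space $\mathcal{X}$, and assume that $\boldsymbol{X}$ is not $(\beta,\ell)$-dissociated. Then there exists a measurable function $f\colon\mathcal{X}^{\binom{[n]}{d}}\to\{0,1\}$ such that for every $I\in\binom{[n]}{\ell}$, \[ \mathbb{P}\big(\big|\mathbb{E}[f(\boldsymbol{X})\,|\,\mathcal{F}_I]-\mathbb{E}[f(\boldsymbol{X})]\big|\geqslant\beta/2\big)\geqslant\beta/2. \]
   Context: $[n]=\{1,\dots,n\}$, $\binom{I}{d}$ is the set of $d$-element subsets of $I$. For $J\subseteq[n]$ with $|J|\geqslant d$, $\boldsymbol{X}_J=\langle X_s:s\in\binom{J}{d}\rangle$ and $\mathcal{F}_J=\sigma(\{X_s:s\in\binom{J}{d}\})$. $\boldsymbol{X}$ is spreadable if for all $J,K\subseteq[n]$ with $|J|=|K|\geqslant d$, $\boldsymbol{X}_J$ and $\boldsymbol{X}_K$ have the same law (identified via the increasing bijection $J\to K$). $\boldsymbol{X}$ is $(\beta,\ell)$-dissociated if for every $J,K\subseteq[n]$ with $|J|,|K|\geqslant d$, $|J|+|K|\leqslant\ell$ and $\max(J)<\min(K)$, and all events $A\in\mathcal{F}_J$, $B\in\mathcal{F}_K$, $|\mathbb{P}(A\cap B)-\mathbb{P}(A)\mathbb{P}(B)|\leqslant\beta$. *)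

(* Defs.v *)
From HB Require Import structures.
From mathcomp Require Import all_boot all_order all_algebra.
From mathcomp Require Import all_classical all_reals all_analysis.
Set Implicit Arguments. Unset Strict Implicit. Unset Printing Implicit Defensive.
Import Order.TTheory GRing.Theory Num.Theory.
Local Open Scope classical_set_scope.
Local Open Scope ring_scope.

Definition dsub (k d : nat) := {t : {set 'I_k} | #|t| == d}.

Definition prod_meas (D : finType) (dX : measure_display) (Xs : measurableType dX)
  : set (set (D -> Xs)) :=
  <<s \bigcup_(i in [set: D])
        [set (fun x : D -> Xs => x i) @^-1` A | A in [set A : set Xs | measurable A]] >>.

(* Image of t ⊆ [k] under the increasing bijection [k] -> J (k = #|J|):
   x ∈ J is in the image iff its rank in J (number of smaller elements of J)
   belongs to t. *)
Definition embed (n k : nat) (J : {set 'I_n}) (t : {set 'I_k}) : {set 'I_n} :=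
  [set x in J | [exists i in t, nat_of_ord i == #|[set y in J | (y < x)%N]| ]].

Definition subarray (n k d : nat) {dT dX} {T : measurableType dT} {Xs : measurableType dX}
  (X : {set 'I_n} -> T -> Xs) (J : {set 'I_n}) : T -> (dsub k d -> Xs) :=
  fun w t => X (embed J (val t)) w.

Definition sigmaF (n d : nat) {dT dX} {T : measurableType dT} {Xs : measurableType dX}
  (X : {set 'I_n} -> T -> Xs) (J : {set 'I_n}) : set (set T) :=
  <<s [set B | exists s : {set 'I_n}, exists A : set Xs,
        [/\ s \subset J, #|s| = d, measurable A & B = X s @^-1` A]] >>.

Definition spreadable (R : realType) (n d : nat) {dT dX} {T : measurableType dT}
  {Xs : measurableType dX} (P : probability T R) (X : {set 'I_n} -> T -> Xs) :=
  forall (k : nat) (J K : {set 'I_n}), #|J| = k -> #|K| = k -> (d <= k)%N ->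
  forall B : set (dsub k d -> Xs), prod_meas B ->
    P (subarray (k:=k) (d:=d) X J @^-1` B) = P (subarray (k:=k) (d:=d) X K @^-1` B).

Definition dissociated (R : realType) (n d : nat) {dT dX} {T : measurableType dT}
  {Xs : measurableType dX} (P : probability T R) (X : {set 'I_n} -> T -> Xs)
  (beta : R) (l : nat) :=
  forall J K : {set 'I_n}, (d <= #|J|)%N -> (d <= #|K|)%N -> (#|J| + #|K| <= l)%N ->
  (forall x y, x \in J -> y \in K -> (x < y)%N) ->
  forall A B : set T, sigmaF d X J A -> sigmaF d X K B ->
    (`| P (A `&` B) - P A * P B | <= beta%:E)%E.

Definition cond_exp_version (R : realType) {dT} {T : measurableType dT}
  (P : probability T R) (F : set (set T)) (Z Y : T -> R) :=
  [/\ (forall B : set R, measurable B -> F (Y @^-1` B)),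
      P.-integrable setT (EFin \o Y) &
      forall A, F A -> (\int[P]_(x in A) (Y x)%:E = \int[P]_(x in A) (Z x)%:E)%E].

(* Main.v *)
Require Import Defs.
From HB Require Import structures.
From mathcomp Require Import all_boot all_order all_algebra.
From mathcomp Require Import all_classical all_reals all_analysis.
From mathcomp Require Import zify ring lra.
Import Order.TTheory GRing.Theory Num.Theory.
Set Implicit Arguments. Unset Strict Implicit. Unset Printing Implicit Defensive.

Section Comb.
Variable n : nat.
Implicit Types S J K : {set 'I_n}.

Definition rk S (x : 'I_n) : nat := #|[set y in S | (y < x)%N]|.

Lemma rk_lt S x : x \in S -> rk S x < #|S|.
Proof.
move=> xS; apply: proper_card; apply/properP; split.
  by apply/fintype.subsetP => y; rewrite inE => /andP[].
by exists x => //; rewrite inE ltnn andbF.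
Qed.

Lemma rk_mono S (x y : 'I_n) : x \in S -> (x < y)%N -> rk S x < rk S y.
Proof.
move=> xS xy; apply: proper_card; apply/properP; split.
  apply/fintype.subsetP => z; rewrite !inE => /andP[-> zx] /=; exact: ltn_trans zx xy.
by exists x; rewrite !inE ?ltnn ?andbF // xS xy.
Qed.

Lemma rk_inj S : {in S &, injective (rk S)}.
Proof.
move=> x y xS yS e; case: (ltngtP x y) => [xy|yx|]; last exact: val_inj.
- by have := rk_mono xS xy; rewrite e ltnn.
- by have := rk_mono yS yx; rewrite e ltnn.
Qed.

Lemma embedE k S (t : {set 'I_k.+1}) :
  #|S| = k.+1 -> embed S t = [set x in S | inord (rk S x) \in t].
Proof.
move=> hS; apply/setP => x; rewrite !inE; case xS: (x \in S) => //=.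
have hx : rk S x < k.+1 by rewrite -hS rk_lt.
apply/existsP/idP => [[i /andP[it /eqP ei]]|xt].
  by rewrite /rk -ei inord_val.
by exists (inord (rk S x)); rewrite xt /= inordK.
Qed.

Lemma phi_inj k S : #|S| = k.+1 -> {in S &, injective (fun x => (inord (rk S x) : 'I_k.+1))}.
Proof.
move=> hS x y xS yS /(congr1 val); rewrite /= !inordK -?hS ?rk_lt //.
exact: rk_inj.
Qed.

Lemma card_embed k S (t : {set 'I_k}) : #|S| = k -> #|embed S t| = #|t|.
Proof.
case: k t => [|k] t hS.
  have -> : t = finset.set0 by apply/setP => -[].
  rewrite cards0; apply/eqP; rewrite cards_eq0; apply/eqP/setP => x.
  by rewrite !inE; apply/andP => -[_ /existsP[[]]].
rewrite embedE //.
have himg : [set (inord (rk S x) : 'I_k.+1) | x in S] = finset.setT.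
  apply/eqP; rewrite eqEcard finset.subsetT cardsT card_ord card_in_imset ?hS ?ltnSn //.
  exact: phi_inj.
rewrite -(card_in_imset (f := fun x => (inord (rk S x) : 'I_k.+1))); last first.
  by move=> x y; rewrite !inE => /andP[xS _] /andP[yS _]; apply: phi_inj.
apply: eq_card => i; apply/imsetP/idP => [[x]|it].
  by rewrite inE => /andP[_ xt] ->.
have : i \in [set (inord (rk S x) : 'I_k.+1) | x in S] by rewrite himg inE.
by case/imsetP => x xS ei; exists x => //; rewrite inE xS -ei it.
Qed.

Lemma embed_surj k S (s : {set 'I_n}) : #|S| = k -> s \subset S -> exists t : {set 'I_k}, embed S t = s.
Proof.
case: k => [|k] hS sS.
  have S0 : S = finset.set0 by apply/eqP; rewrite -cards_eq0 hS.
  exists finset.set0; apply/setP => x; rewrite !inE.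
  have -> : (x \in s) = false by apply/negbTE; apply/negP => /(fintype.subsetP sS); rewrite S0 inE.
  by rewrite S0 inE.
exists [set (inord (rk S x) : 'I_k.+1) | x in s]; rewrite embedE //.
apply/setP => x; rewrite inE; case xS: (x \in S) => /=; last first.
  by apply/esym/negbTE/negP => /(fintype.subsetP sS); rewrite xS.
apply/imsetP/idP => [[y ys e]|xs]; last by exists x.
by rewrite (phi_inj hS xS (fintype.subsetP sS _ ys) e).
Qed.

Section Split.
Variables J K : {set 'I_n}.
Hypothesis JK : forall a b : 'I_n, a \in J -> b \in K -> (a < b)%N.

Lemma JKdisj : J :&: K = finset.set0.
Proof. by apply/setP => x; rewrite !inE; apply/negbTE/negP => /andP[a b]; have := JK a b; rewrite ltnn. Qed.

Lemma rkUJ x : x \in J -> rk (J :|: K) x = rk J x.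
Proof.
move=> xJ; rewrite /rk; congr #|pred_of_set _|; apply/setP => y; rewrite !inE.
case yK: (y \in K); last by rewrite orbF.
by rewrite orbT /=; have := JK xJ yK => xy; rewrite ltnNge ltnW // andbF; case: (y \in J).
Qed.

Lemma rkUK x : x \in K -> rk (J :|: K) x = #|J| + rk K x.
Proof.
move=> xK; rewrite /rk.
have -> : [set y in J :|: K | (y < x)%N] = J :|: [set y in K | (y < x)%N].
  apply/setP => y; rewrite !inE; case yJ: (y \in J) => /=; last by [].
  by rewrite (JK yJ xK).
rewrite cardsU; have -> : J :&: [set y in K | (y < x)%N] = finset.set0.
  by apply/setP => y; rewrite !inE; apply/negbTE/negP => /andP[a /andP[b _]]; have := JK a b; rewrite ltnn.
by rewrite cards0 subn0.
Qed.

Lemma embedUl j k (hJ : #|J| = j) (t : {set 'I_j}) :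
  embed (J :|: K) [set lshift k i | i in t] = embed J t.
Proof.
apply/setP => x; rewrite !inE.
case xJ: (x \in J) => /=.
  have := rkUJ xJ; rewrite /rk => ->.
  apply/existsP/existsP => [[i /andP[/imsetP[i' i't ->] e]]|[i /andP[it e]]].
    by exists i'; rewrite i't.
  by exists (lshift k i); rewrite imset_f //=.
case xK: (x \in K) => //=; apply/negbTE/negP => /existsP[i /andP[/imsetP[i' _ ->] /eqP e]].
have := rkUK xK; rewrite /rk -e /= => h.
by have := ltn_ord i'; rewrite h hJ ltnNge leq_addr.
Qed.

Lemma embedUr j k (hJ : #|J| = j) (t : {set 'I_k}) :
  embed (J :|: K) [set rshift j i | i in t] = embed K t.
Proof.
apply/setP => x; rewrite !inE.
case xK: (x \in K); rewrite ?andbT ?andbF ?orbT ?orbF.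
  have := rkUK xK; rewrite /rk => ->.
  apply/existsP/existsP => [[i /andP[/imsetP[i' i't ->] e]]|[i /andP[it e]]].
    by exists i'; rewrite i't /=; rewrite /= hJ eqn_add2l in e.
  by exists (rshift j i); rewrite imset_f //= hJ eqn_add2l.
case xJ: (x \in J) => //=; apply/negbTE/negP => /existsP[i /andP[/imsetP[i' _ ->] /eqP e]].
have := rk_lt xJ; rewrite -(rkUJ xJ) /rk -e /= hJ.
by rewrite ltnNge leq_addr.
Qed.
End Split.

End Comb.

Lemma card_sub_ex (T : finType) (S : {set T}) k :
  k <= #|S| -> exists2 S' : {set T}, S' \subset S & #|S'| = k.
Proof.
elim: k => [|k IH] hk; first by exists finset.set0; rewrite ?finset.sub0set ?cards0.
have [S' sS' cS'] := IH (ltnW hk).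
have : S' \proper S by rewrite properEcard sS' cS'.
case/properP => _ [x xS xS'].
exists (x |: S'); first by rewrite finset.subUset finset.sub1set xS sS'.
by rewrite cardsU1 xS' cS'.
Qed.

Lemma card_J0 n j : j <= n -> #|[set x : 'I_n | (x < j)%N]| = j.
Proof.
move=> h.
have -> : [set x : 'I_n | (x < j)%N] = [set widen_ord h i | i : 'I_j].
  apply/setP => x; rewrite inE; apply/idP/imsetP => [xj|[i _ ->]]; last by rewrite /= ltn_ord.
  by exists (Ordinal xj) => //; apply: val_inj.
rewrite card_imset ?card_ord // => a b /(congr1 val) /= e; exact: val_inj.
Qed.

Local Open Scope classical_set_scope.

Lemma sigma_setI {A : Type} (S : set (set A)) : sigma_algebra setT S ->
  forall U V, S U -> S V -> S (U `&` V).
Proof.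
case=> S0 SC SU U V hU hV.
have -> : U `&` V = setT `\` ((setT `\` U) `|` (setT `\` V)).
  by rewrite !setTD setCU !setCK.
apply: (SC); rewrite -bigcup2E; apply: (SU) => -[|[|i]] /=; [exact: SC|exact: SC|exact: S0].
Qed.

Lemma sigma_pre {A B : Type} (F : A -> B) (G : set (set B)) (S : set (set A)) :
  sigma_algebra setT S -> (forall g, G g -> S (F @^-1` g)) ->
  forall C, <<s G >> C -> S (F @^-1` C).
Proof.
move=> hS hG C hC.
have : <<s G >> `<=` image_set_system setT F S.
  apply: smallest_sub; first exact: sigma_algebra_image.
  by move=> g Gg; rewrite /image_set_system /= setTI; exact: hG.
by move/(_ C hC); rewrite /image_set_system /= setTI.
Qed.

Lemma sigma_pre_ex {A : Type} {B : Type} (F : A -> B) (G : set (set B)) (H : set (set A)) :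
  (forall h, H h -> exists2 g, <<s G >> g & h = F @^-1` g) ->
  forall h, <<s H >> h -> exists2 g, <<s G >> g & h = F @^-1` g.
Proof.
move=> hH h hh.
have : <<s H >> `<=` preimage_set_system setT F <<s G >>.
  apply: smallest_sub.
    apply: sigma_algebra_preimage; exact: smallest_sigma_algebra.
  move=> g /hH [g' g'G ->]; exists g' => //; by rewrite setTI.
by move/(_ h hh) => [g' g'G <-]; exists g' => //; rewrite setTI.
Qed.

Section Spec.
Context {dX : measure_display} {Xs : measurableType dX}.

Lemma prod_meas_sigma (D : finType) : sigma_algebra setT (@prod_meas D _ Xs).
Proof. exact: smallest_sigma_algebra. Qed.

Lemma prod_meas_coord (D : finType) (i : D) (A : set Xs) : measurable A ->
  prod_meas ((fun x : D -> Xs => x i) @^-1` A).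
Proof. by move=> mA; apply: sub_sigma_algebra; exists i => //; exists A. Qed.

Lemma prod_meas_comp (D1 D2 : finType) (h : D2 -> D1) (C : set (D2 -> Xs)) :
  prod_meas C -> prod_meas ((fun x : D1 -> Xs => x \o h) @^-1` C).
Proof.
apply: sigma_pre; first exact: prod_meas_sigma.
move=> g [i _ [A mA <-]]; exact: prod_meas_coord.
Qed.

Context {dT : measure_display} {T : measurableType dT} (n d : nat)
  (X : {set 'I_n} -> T -> Xs).
Implicit Types (S s : {set 'I_n}).

Lemma sigmaF_sigma S : sigma_algebra setT (sigmaF d X S).
Proof. exact: smallest_sigma_algebra. Qed.

Lemma sigmaF_gen S s A : s \subset S -> #|s| = d -> measurable A ->
  sigmaF d X S (X s @^-1` A).
Proof. by move=> sS cs mA; apply: sub_sigma_algebra; exists s, A. Qed.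

Lemma sigmaF_pre k S C : #|S| = k -> prod_meas C ->
  sigmaF d X S (subarray (k:=k) (d:=d) X S @^-1` C).
Proof.
move=> hS; apply: sigma_pre; first exact: sigmaF_sigma.
move=> g [i _ [A mA <-]]; apply: sigmaF_gen => //.
- apply/fintype.subsetP => x; rewrite inE => /andP[] //.
- by rewrite (card_embed _ hS); apply/eqP; exact: (valP i).
Qed.

Lemma sigmaF_ex k S A : #|S| = k -> sigmaF d X S A ->
  exists2 C, prod_meas C & A = subarray (k:=k) (d:=d) X S @^-1` C.
Proof.
move=> hS; apply: sigma_pre_ex => _ [s [B [sS cs mB ->]]].
have [t et] := embed_surj hS sS.
have ct : #|t| == d by rewrite -(card_embed t hS) et cs.
exists ((fun x : dsub k d -> Xs => x (exist _ t ct)) @^-1` B).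
  exact: prod_meas_coord.
by rewrite -et.
Qed.

Lemma sigmaF_mono S1 S2 : S1 \subset S2 -> sigmaF d X S1 `<=` sigmaF d X S2.
Proof.
move=> h; rewrite /sigmaF; apply: (@sub_sigma_algebra2 T setT) => _ [s [A [sS cs mA ->]]].
by exists s, A; split => //; exact: fintype.subset_trans h.
Qed.

Lemma sigmaF_meas (hX : forall s, #|s| = d -> measurable_fun setT (X s)) S A :
  sigmaF d X S A -> measurable A.
Proof.
apply: smallest_sub; first exact: sigma_algebra_measurable.
move=> _ [s [B [sS cs mB ->]]]; rewrite -(setTI (_ @^-1` _)); exact: hX.
Qed.
End Spec.

Section Spec2.
Context {dX : measure_display} {Xs : measurableType dX}.
Context {dT : measure_display} {T : measurableType dT} (n d : nat)
  (X : {set 'I_n} -> T -> Xs) (S : {set 'I_n}).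
Lemma sigmaF_setI U V : sigmaF d X S U -> sigmaF d X S V -> sigmaF d X S (U `&` V).
Proof. apply: sigma_setI; exact: smallest_sigma_algebra. Qed.
Lemma sigmaF_setD U V : sigmaF d X S U -> sigmaF d X S V -> sigmaF d X S (U `\` V).
Proof.
move=> hU hV; rewrite setDE; apply: sigmaF_setI => //.
rewrite -setTD; exact: sigma_algebraCD.
Qed.
End Spec2.

Local Open Scope ring_scope.

Section Prob.
Context (R : realType) {dT : measure_display} {T : measurableType dT} (P : probability T R).
Definition pr (Z : set T) : R := fine (P Z).
Lemma prE Z : measurable Z -> P Z = (pr Z)%:E.
Proof. by move=> mZ; rewrite /pr fineK // fin_num_measure. Qed.
Lemma pr_ge0 Z : 0 <= pr Z.
Proof. exact/fine_ge0/measure_ge0. Qed.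
Lemma pr_le1 Z : measurable Z -> pr Z <= 1.
Proof. by move=> mZ; rewrite -lee_fin -prE // probability_le1. Qed.
Lemma pr_le Z1 Z2 : measurable Z1 -> measurable Z2 -> Z1 `<=` Z2 -> pr Z1 <= pr Z2.
Proof. by move=> m1 m2 h; rewrite -lee_fin -!prE //; apply: le_measure; rewrite ?inE. Qed.
Lemma prU Z1 Z2 : measurable Z1 -> measurable Z2 -> Z1 `&` Z2 = set0 ->
  pr (Z1 `|` Z2) = pr Z1 + pr Z2.
Proof.
move=> m1 m2 h; apply: EFin_inj; rewrite EFinD -!prE //; last exact: measurableU.
exact: measureU.
Qed.
End Prob.

Lemma emb_proof n k d (S : {set 'I_n}) (hS : #|S| = k) (t : dsub k d) :
  #|embed S (val t)| == d.
Proof. by rewrite (card_embed _ hS); exact: (valP t). Qed.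
Definition emb n k d (S : {set 'I_n}) (hS : #|S| = k) (t : dsub k d) : dsub n d :=
  exist _ (embed S (val t)) (emb_proof hS t).

Lemma lsh_proof j k d (t : dsub j d) : #|[set lshift k i | i in val t]%SET| == d.
Proof. by rewrite card_imset; [exact: (valP t) | exact: lshift_inj]. Qed.
Definition lsh j k d (t : dsub j d) : dsub (j + k) d :=
  exist _ [set lshift k i | i in val t]%SET (lsh_proof k t).
Lemma rsh_proof j k d (t : dsub k d) : #|[set rshift j i | i in val t]%SET| == d.
Proof. by rewrite card_imset; [exact: (valP t) | exact: rshift_inj]. Qed.
Definition rsh j k d (t : dsub k d) : dsub (j + k) d :=
  exist _ [set rshift j i | i in val t]%SET (rsh_proof j t).

Lemma cardUJK n (J K : {set 'I_n}) : (forall a b : 'I_n, a \in J -> b \in K -> (a < b)%N) ->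
  #|J :|: K| = (#|J| + #|K|)%N.
Proof. by move=> JK; rewrite cardsU (JKdisj JK) cards0 subn0. Qed.

Unset Implicit Arguments.

Theorem proposition2p8 (R : realType) (n d l : nat)
  (dT : measure_display) (T : measurableType dT)
  (dX : measure_display) (Xs : measurableType dX)
  (P : probability T R) (X : {set 'I_n} -> T -> Xs) (beta : R) :
  (0 < d)%N -> (d <= l)%N -> (l <= n)%N -> 0 < beta -> beta <= 1 ->
  (forall s : {set 'I_n}, #|s| = d -> measurable_fun setT (X s)) ->
  spreadable d P X ->
  ~ dissociated d P X beta l ->
  exists f : (dsub n d -> Xs) -> bool,
    prod_meas (f @^-1` [set true]) /\
    forall I : {set 'I_n}, #|I| = l ->
    forall Y : T -> R,
      cond_exp_version P (sigmaF d X I)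
        (fun w => (f (fun s => X (val s) w) : nat)%:R) Y ->
      ((beta / 2)%:E <= P [set w | (beta / 2)%:E <=
          `| (Y w)%:E - \int[P]_w' ((f (fun s => X (val s) w') : nat)%:R)%:E | ])%E.
Proof.
move=> d0 dl ln b0 b1 hX hsp hnd.
have [J [K [A [B [dJ [dK [JKl [JK [sA [sB hAB]]]]]]]]]] : exists (J K : {set 'I_n}) (A B : set T),
  (d <= #|J|)%N /\ (d <= #|K|)%N /\ (#|J| + #|K| <= l)%N /\
  (forall x y : 'I_n, x \in J -> y \in K -> (x < y)%N) /\
  sigmaF d X J A /\ sigmaF d X K B /\
  ~ (`|P (A `&` B) - P A * P B| <= beta%:E)%E.
  apply: contrapT => H; apply: hnd => J K dJ dK JKl JK A B sA sB.
  by apply: contrapT => H'; apply: H; exists J, K, A, B.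
have [j hj] : exists j, #|J| = j by exists #|J|.
have [k hk] : exists k, #|K| = k by exists #|K|.
rewrite hj hk in dJ dK JKl.
have mA := sigmaF_meas hX sA; have mB := sigmaF_meas hX sB.
have [C1 mC1 eA] := sigmaF_ex hj sA.
have [D1 mD1 eB] := sigmaF_ex hk sB.
have hjn : (j <= n)%N by apply: leq_trans ln; apply: leq_trans JKl; exact: leq_addr.
pose J0 := [set x : 'I_n | (x < j)%N]%SET.
have hJ0 : #|J0| = j by exact: card_J0 hjn.
pose f := fun x : dsub n d -> Xs => `[< C1 (x \o emb hJ0) >].
exists f; split.
  have -> : f @^-1` [set true] = (fun x : dsub n d -> Xs => x \o emb hJ0) @^-1` C1.
    by apply/seteqP; split => x /=; [move/asboolP | move=> h; apply/asboolP].
  exact: prod_meas_comp.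
move=> I hI Y [hY1 hY2 hY3].
pose I2 := [set x in I | (j <= x)%N]%SET.
have hI2 : (k <= #|I2|)%N.
  have : I \subset J0 :|: I2.
    apply/fintype.subsetP => x xI; rewrite !inE xI /=; by case: (ltnP x j).
  move/subset_leq_card; rewrite cardsU hI hJ0 => h.
  have h2 := leq_trans h (leq_subr _ _); lia.
have [K' sK' hK'] := card_sub_ex hI2.
have K'I : K' \subset I.
  apply/fintype.subsetP => x /(fintype.subsetP sK'); rewrite inE => /andP[] //.
have JK0 : forall a b : 'I_n, a \in J0 -> b \in K' -> (a < b)%N.
  move=> a b; rewrite inE => aj /(fintype.subsetP sK'); rewrite inE => /andP[_ jb].
  exact: leq_trans aj jb.
pose A0 := subarray (k:=j) (d:=d) X J0 @^-1` C1.
pose B' := subarray (k:=k) (d:=d) X K' @^-1` D1.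
have sA0 : sigmaF d X J0 A0 by exact: sigmaF_pre hJ0 mC1.
have sB' : sigmaF d X I B' by apply: (sigmaF_mono K'I); exact: sigmaF_pre hK' mD1.
have mA0 := sigmaF_meas hX sA0; have mB' := sigmaF_meas hX sB'.
have PA : P A = P A0 by rewrite eA; exact: hsp hj hJ0 dJ C1 mC1.
have PB : P B = P B' by rewrite eB; exact: hsp hk hK' dK D1 mD1.
have PAB : P (A `&` B) = P (A0 `&` B').
  pose E := (fun z : dsub (j + k) d -> Xs => z \o @lsh j k d) @^-1` C1 `&`
            (fun z : dsub (j + k) d -> Xs => z \o @rsh j k d) @^-1` D1.
  have mE : prod_meas E.
    apply: (sigma_setI (prod_meas_sigma _)).
    exact: prod_meas_comp. exact: prod_meas_comp.
  have hU : #|J :|: K| = (j + k)%N by rewrite cardUJK // hj hk.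
  have hV : #|J0 :|: K'| = (j + k)%N by rewrite cardUJK // hJ0 hK'.
  have eU : A `&` B = subarray (k:=j+k) (d:=d) X (J :|: K) @^-1` E.
    have f1 w : subarray (k:=j+k) (d:=d) X (J :|: K) w \o @lsh j k d = subarray (k:=j) (d:=d) X J w.
      apply/funext => t; rewrite /subarray /=.
      by rewrite (embedUl JK k hj).
    have f2 w : subarray (k:=j+k) (d:=d) X (J :|: K) w \o @rsh j k d = subarray (k:=k) (d:=d) X K w.
      apply/funext => t; rewrite /subarray /=.
      by rewrite (embedUr JK hj).
    by rewrite eA eB; apply/seteqP; split => w /=; rewrite /E /preimage /= f1 f2.
  have eV : A0 `&` B' = subarray (k:=j+k) (d:=d) X (J0 :|: K') @^-1` E.
    have f1 w : subarray (k:=j+k) (d:=d) X (J0 :|: K') w \o @lsh j k d = subarray (k:=j) (d:=d) X J0 w.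
      apply/funext => t; rewrite /subarray /=.
      by rewrite (embedUl JK0 k hJ0).
    have f2 w : subarray (k:=j+k) (d:=d) X (J0 :|: K') w \o @rsh j k d = subarray (k:=k) (d:=d) X K' w.
      apply/funext => t; rewrite /subarray /=.
      by rewrite (embedUr JK0 hJ0).
    by apply/seteqP; split => w /=; rewrite /E /preimage /= f1 f2.
  by rewrite eU eV; apply: (hsp _ _ _ hU hV) => //; lia.
have fX w : ((f (fun s => X (val s) w) : nat)%:R : R) = \1_A0 w.
  by rewrite indicE /f; congr (_%:R).
have intf D : measurable D -> (\int[P]_(w in D) ((f (fun s => X (val s) w) : nat)%:R)%:E = P (A0 `&` D))%E.
  move=> mD; rewrite -(integral_indic P mD mA0); apply: eq_integral => w _; by rewrite fX.
rewrite intf // setIT (prE P mA0).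
set c := pr P A0.
pose Ev := [set w | beta / 2 <= `|Y w - c|].
have -> : [set w | ((beta/2)%:E <= `|(Y w)%:E - c%:E|)%E] = Ev.
  by apply/seteqP; split => w /=; rewrite lee_fin.
have mset : measurable [set r : R | beta / 2 <= `|r - c|].
  have mg : measurable_fun setT (fun r : R => `|r - c|).
    apply: measurableT_comp; first exact: measurable_realfun.normr_measurable.
    by apply: measurable_realfun.measurable_funD.
  suff -> : [set r : R | beta / 2 <= `|r - c|] = (fun r => `|r - c|) @^-1` `[beta/2, +oo[%classic.
    rewrite -(setTI (_ @^-1` _)); apply: mg => //; exact: measurable_itv.
  by apply/seteqP; split => r /=; rewrite in_itv /= andbT.
have sEv : sigmaF d X I Ev := hY1 _ mset.
have mEv := sigmaF_meas hX sEv.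
pose G := B' `\` Ev. pose H := B' `&` Ev.
have sG : sigmaF d X I G by exact: sigmaF_setD.
have mG := sigmaF_meas hX sG.
have mH : measurable H by exact: measurableI.
have iG := hY3 G sG; rewrite intf // in iG.
have intY : P.-integrable G (EFin \o Y) := integrableS measurableT mG (subsetT _) hY2.
have up : (\int[P]_(x in G) (Y x)%:E <= \int[P]_(x in G) (cst (c + beta/2)%:E x))%E.
  apply: le_integral => //; first exact: finite_measure_integrable_cst.
  move=> x; rewrite in_setE => -[_ nE]; rewrite /= lee_fin.
  have : `|Y x - c| < beta/2 by rewrite ltNge; apply/negP.
  rewrite ltr_distlC => /andP[h1 h2]; lra.
have lo : (\int[P]_(x in G) (cst (c - beta/2)%:E x) <= \int[P]_(x in G) (Y x)%:E)%E.
  apply: le_integral => //; first exact: finite_measure_integrable_cst.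
  move=> x; rewrite in_setE => -[_ nE]; rewrite /= lee_fin.
  have : `|Y x - c| < beta/2 by rewrite ltNge; apply/negP.
  rewrite ltr_distlC => /andP[h1 h2]; lra.
have mA0G : measurable (A0 `&` G) by exact: measurableI.
rewrite integral_cst // iG (prE P mA0G) in up.
rewrite integral_cst // iG (prE P mA0G) in lo.
have hPG := prE P mG.
have {}up : pr P (A0 `&` G) <= (c + beta / 2) * pr P G.
  by rewrite -lee_fin EFinM -hPG; exact: up.
have {}lo : (c - beta / 2) * pr P G <= pr P (A0 `&` G).
  by rewrite -lee_fin EFinM -hPG; exact: lo.
have eB'U : B' = H `|` G.
  apply/seteqP; split => w /=.
    by move=> Bw; have [e|e] := pselect (Ev w); [left | right].
  by move=> [[]|[]].
have HG0 : H `&` G = set0 by apply/seteqP; split => w // [[_ e] [_ ne]].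
have mA0H : measurable (A0 `&` H) by exact: measurableI.
have mA0B' : measurable (A0 `&` B') by exact: measurableI.
have eA0B' : pr P (A0 `&` B') = pr P (A0 `&` H) + pr P (A0 `&` G).
  rewrite -prU //; first by rewrite eB'U setIUr.
  by apply/seteqP; split => w // [[_ [_ e]] [_ [_ ne]]].
have eB' : pr P B' = pr P H + pr P G by rewrite {1}eB'U prU.
rewrite PAB PA PB (prE P mA0B') (prE P mA0) (prE P mB') -EFinM -EFinB abse_EFin lee_fin in hAB.
have hAB' : beta < `|pr P (A0 `&` B') - c * pr P B'| by rewrite ltNge; apply/negP.
rewrite (prE P mEv) lee_fin.
have a1 := pr_ge0 P (A0 `&` H).
have a2 : pr P (A0 `&` H) <= pr P H by apply: pr_le => // w [].
have a3 : pr P H <= pr P Ev by apply: pr_le => // w [].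
have a4 := pr_ge0 P G. have a5 := pr_le1 P mG.
have c0 : 0 <= c := pr_ge0 P A0. have c1 : c <= 1 := pr_le1 P mA0.
have p1 : 0 <= c * pr P H by rewrite mulr_ge0 // pr_ge0.
have p2 : c * pr P H <= pr P H by rewrite ler_piMl // pr_ge0.
have p3 : beta * pr P G <= beta by rewrite ler_piMr // ltW.
move: hAB'; rewrite eA0B' eB' ltr_normr => /orP[h|h]; nra.
Qed.
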